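(* In the setting described in the context with $N_s=3M$, let $\mathbf N=[\mathbf H,\mathbf A,\dot{\mathbf A}_\theta,\dot{\mathbf A}_\phi]\in\mathbb C^{N_t\times(K+3M)}$. Then the problem $\max\{f(\mathbf W):\mathbf W\in\mathbb C^{N_t\times(K+3M)},\ \mathrm{tr}(\mathbf W\mathbf W^H)\le P_t\}$ can be reformulated as $$\max_{\mathbf P\in\mathbb C^{(K+3M)\times(K+3M)}}\ f(\mathbf N\mathbf P)\quad\text{s.t.}\quad \mathrm{tr}(\mathbf P\mathbf P^H\mathbf N^H\mathbf N)\le P_t,$$ i.e., the two problems have the same optimal value, and $\mathbf W=\mathbf N\mathbf P$ is optimal for the former whenever $\mathbf P$ is optimal for the latter.
   Context: Positive integers $N_t,N_r,K,M,L$; channels $\mathbf h_k\in\mathbb C^{N_t}$, $\mathbf H=[\mathbf h_1,\dots,\mathbf h_K]$, noise variances $\sigma_{ck}^2>0$; $\sigma_s^2>0$; weights $\delta_c,\delta_s\ge0$; $P_t>0$. $\mathbf W=[\mathbf W_c,\mathbf W_s]$ with $\mathbf W_c=[\mathbf w_{c1},\dots,\mathbf w_{cK}]\in\mathbb C^{N_t\times K}$, $\mathbf W_s\in\mathbb C^{N_t\times N_s}$, $\mathbf R_x=\mathbf W\mathbf W^H$. Rate $R_k(\mathbf W)=\log\big(1+\frac{|\mathbf h_k^H\mathbf w_{ck}|^2}{\sum_{j\ne k}|\mathbf h_k^H\mathbf w_{cj}|^2+\|\mathbf h_k^H\mathbf W_s\|_F^2+\sigma_{ck}^2}\big)$. Sensing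 model: differentiable $\mathbf a:\mathbb R^2\to\mathbb C^{N_t}$, $\mathbf b:\mathbb R^2\to\mathbb C^{N_r}$; parameters $\theta_m,\phi_m\in\mathbb R,\alpha_m\in\mathbb C$; $\mathbf A=[\mathbf a(\theta_m,\phi_m)]_m$, $\mathbf B=[\mathbf b(\theta_m,\phi_m)]_m$, $\mathbf U=\mathrm{diag}(\alpha_m)$; $\dot{\mathbf A}_\theta,\dot{\mathbf A}_\phi,\dot{\mathbf B}_\theta,\dot{\mathbf B}_\phi$ have $m$-th columns the partial derivatives of $\mathbf a$ resp. $\mathbf b$ w.r.t. first resp. second argument at $(\theta_m,\phi_m)$. $\mathbf F(\mathbf W)=\frac{2L}{\sigma_s^2}\begin{bmatrix}\Re\mathbf F_{11}&\Re\mathbf F_{12}&\Re\mathbf F_{13}&-\Im\mathbf F_{13}\\ \Re\mathbf F_{12}^{\mathsf T}&\Re\mathbf F_{22}&\Re\mathbf F_{23}&-\Im\mathbf F_{23}\\ \Re\mathbf F_{13}^{\mathsf T}&\Re\mathbf F_{23}^{\mathsf T}&\Re\mathbf F_{33}&-\Im\mathbf F_{33}\\ -\Im\mathbf F_{13}^{\mathsf T}&-\Im\mathbf F_{23}^{\mathsf T}&-\Im\mathbf F_{33}^{\mathsf T}&\Re\mathbf F_{33}\end{bmatrix}$ with $\mathbf F_{11}=(\mathbf U\mathbf A^H\mathbf R_x\mathbf A\mathbf U^H)^{\mathsf T}\odot(\dot{\mathbf B}_\theta^H\dot{\mathbf B}_\theta)+(\mathbf U\mathbf A^H\mathbf R_x\dot{\mathbf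 A}_\theta\mathbf U^H)^{\mathsf T}\odot(\mathbf B^H\dot{\mathbf B}_\theta)+(\mathbf U\dot{\mathbf A}_\theta^H\mathbf R_x\mathbf A\mathbf U^H)^{\mathsf T}\odot(\dot{\mathbf B}_\theta^H\mathbf B)+(\mathbf U\dot{\mathbf A}_\theta^H\mathbf R_x\dot{\mathbf A}_\theta\mathbf U^H)^{\mathsf T}\odot(\mathbf B^H\mathbf B)$; $\mathbf F_{12}=(\mathbf U\mathbf A^H\mathbf R_x\mathbf A\mathbf U^H)^{\mathsf T}\odot(\dot{\mathbf B}_\theta^H\dot{\mathbf B}_\phi)+(\mathbf U\mathbf A^H\mathbf R_x\dot{\mathbf A}_\theta\mathbf U^H)^{\mathsf T}\odot(\mathbf B^H\dot{\mathbf B}_\phi)+(\mathbf U\dot{\mathbf A}_\phi^H\mathbf R_x\mathbf A\mathbf U^H)^{\mathsf T}\odot(\dot{\mathbf B}_\theta^H\mathbf B)+(\mathbf U\dot{\mathbf A}_\phi^H\mathbf R_x\dot{\mathbf A}_\theta\mathbf U^H)^{\mathsf T}\odot(\mathbf B^H\mathbf B)$; $\mathbf F_{22}$ = $\mathbf F_{11}$ with $\theta\to\phi$; $\mathbf F_{13}=(\mathbf A^H\mathbf R_x\mathbf A\mathbf U^H)^{\mathsf T}\odot(\dot{\mathbf B}_\theta^H\mathbf B)+(\mathbf A^H\mathbf R_x\dot{\mathbf A}_\theta\mathbf U^H)^{\mathsf T}\odot(\mathbf B^H\mathbf B)$; $\mathbf F_{23}$ = $\mathbf F_{13}$ with $\theta\to\phi$;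 $\mathbf F_{33}=(\mathbf A^H\mathbf R_x\mathbf A)^{\mathsf T}\odot(\mathbf B^H\mathbf B)$ ($\odot$ Hadamard). $f(\mathbf W)=\delta_c\sum_{k=1}^KR_k(\mathbf W)-\delta_s\mathrm{tr}(\mathbf F(\mathbf W)^{-1})$ (considered where $\mathbf F(\mathbf W)$ is invertible). *)

(* Defs.v *)
From HB Require Import structures.
From mathcomp Require Import all_boot all_order all_algebra.
From mathcomp Require Import all_classical all_reals all_analysis.
From mathcomp.real_closed Require Import complex.
Set Implicit Arguments. Unset Strict Implicit. Unset Printing Implicit Defensive.
Import Order.TTheory GRing.Theory Num.Theory.
Local Open Scope ring_scope.
Local Open Scope complex_scope.

Section ISAC.
Variable R : realType.
Local Notation C := R[i].

Definition adjmx m n (X : 'M[C]_(m, n)) : 'M[C]_(n, m) := (map_mx (@conjc R) X)^T.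
Definition hadmx m n (X Y : 'M[C]_(m, n)) : 'M[C]_(m, n) := \matrix_(i, j) (X i j * Y i j).
Definition remx m n (X : 'M[C]_(m, n)) : 'M[R]_(m, n) := map_mx (@complex.Re R) X.
Definition immx m n (X : 'M[C]_(m, n)) : 'M[R]_(m, n) := map_mx (@complex.Im R) X.
Definition sqnc (z : C) : R := complex.Re z ^+ 2 + complex.Im z ^+ 2.

Definition partial1 (g : R * R -> R) (p : R * R) : R := derive1 (fun t => g (t, p.2)) p.1.
Definition partial2 (g : R * R -> R) (p : R * R) : R := derive1 (fun t => g (p.1, t)) p.2.

Definition cpartial1 (g : R * R -> C) (p : R * R) : C :=
  (partial1 (fun q => complex.Re (g q)) p) +i* (partial1 (fun q => complex.Im (g q)) p).
Definition cpartial2 (g : R * R -> C) (p : R * R) : C :=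
  (partial2 (fun q => complex.Re (g q)) p) +i* (partial2 (fun q => complex.Im (g q)) p).

Definition steer n M (a : 'I_n -> R * R -> C) (th ph : 'I_M -> R) : 'M[C]_(n, M) :=
  \matrix_(i, m) a i (th m, ph m).
Definition steer_dth n M (a : 'I_n -> R * R -> C) (th ph : 'I_M -> R) : 'M[C]_(n, M) :=
  \matrix_(i, m) cpartial1 (a i) (th m, ph m).
Definition steer_dph n M (a : 'I_n -> R * R -> C) (th ph : 'I_M -> R) : 'M[C]_(n, M) :=
  \matrix_(i, m) cpartial2 (a i) (th m, ph m).

Variables (Nt Nr K M L : nat).
Local Notation Ns := (M + (M + M))%N.

(* Achievable rate of user k;  W = [W_c, W_s],  W_c = lsubmx W, W_s = rsubmx W *)
Definition rate (H : 'M[C]_(Nt, K)) (sigc : 'I_K -> R)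
  (W : 'M[C]_(Nt, K + Ns)) (k : 'I_K) : R :=
  let G := adjmx H *m lsubmx W in
  let S := adjmx H *m rsubmx W in
  ln (1 + sqnc (G k k) /
      (\sum_(j < K | j != k) sqnc (G k j) + \sum_(j < Ns) sqnc (S k j) + sigc k ^+ 2)).

Section Fisher.
Variables (A Ath Aph : 'M[C]_(Nt, M)) (B Bth Bph : 'M[C]_(Nr, M)) (U : 'M[C]_M).
Variable Rx : 'M[C]_Nt.

Definition Fgen (a1 : 'M[C]_(Nt, M)) (b1 : 'M[C]_(Nr, M))
                (a2 : 'M[C]_(Nt, M)) (b2 : 'M[C]_(Nr, M)) : 'M[C]_M :=
  hadmx (U *m adjmx A *m Rx *m A *m adjmx U)^T (adjmx b1 *m b2)
  + hadmx (U *m adjmx A *m Rx *m a1 *m adjmx U)^T (adjmx B *m b2)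
  + hadmx (U *m adjmx a2 *m Rx *m A *m adjmx U)^T (adjmx b1 *m B)
  + hadmx (U *m adjmx a2 *m Rx *m a1 *m adjmx U)^T (adjmx B *m B).

Definition F11 := Fgen Ath Bth Ath Bth.
Definition F12 := Fgen Ath Bth Aph Bph.
Definition F22 := Fgen Aph Bph Aph Bph.
Definition F3gen (a : 'M[C]_(Nt, M)) (b : 'M[C]_(Nr, M)) : 'M[C]_M :=
  hadmx (adjmx A *m Rx *m A *m adjmx U)^T (adjmx b *m B)
  + hadmx (adjmx A *m Rx *m a *m adjmx U)^T (adjmx B *m B).
Definition F13 := F3gen Ath Bth.
Definition F23 := F3gen Aph Bph.
Definition F33 := hadmx (adjmx A *m Rx *m A)^T (adjmx B *m B).

(* the 4M x 4M real matrix, block rows (theta, phi, Re alpha, Im alpha) *)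
Definition Fblock : 'M[R]_((M + M) + (M + M)) :=
  block_mx
    (block_mx (remx F11) (remx F12) (remx F12)^T (remx F22))
    (block_mx (remx F13) (- immx F13) (remx F23) (- immx F23))
    (block_mx (remx F13)^T (remx F23)^T (- immx F13)^T (- immx F23)^T)
    (block_mx (remx F33) (- immx F33) (- immx F33)^T (remx F33)).
End Fisher.

Definition Umx (alpha : 'I_M -> C) : 'M[C]_M := diag_mx (\row_m alpha m).

Definition FIM (a : 'I_Nt -> R * R -> C) (b : 'I_Nr -> R * R -> C)
  (th ph : 'I_M -> R) (alpha : 'I_M -> C) (sigs2 : R) (W : 'M[C]_(Nt, K + Ns))
  : 'M[R]_((M + M) + (M + M)) :=
  ((2 * L%:R) / sigs2) *:
  Fblock (steer a th ph) (steer_dth a th ph) (steer_dph a th ph)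
         (steer b th ph) (steer_dth b th ph) (steer_dph b th ph)
         (Umx alpha) (W *m adjmx W).

Definition fobj (H : 'M[C]_(Nt, K)) (sigc : 'I_K -> R)
  (a : 'I_Nt -> R * R -> C) (b : 'I_Nr -> R * R -> C)
  (th ph : 'I_M -> R) (alpha : 'I_M -> C) (sigs2 dc ds : R)
  (W : 'M[C]_(Nt, K + Ns)) : R :=
  dc * (\sum_(k < K) rate H sigc W k) - ds * \tr (invmx (FIM a b th ph alpha sigs2 W)).

End ISAC.

(* Main.v *)
Require Import Defs.
From HB Require Import structures.
From mathcomp Require Import all_boot all_order all_algebra.
From mathcomp Require Import all_classical all_reals all_analysis.
From mathcomp.real_closed Require Import complex.
Import Order.TTheory GRing.Theory Num.Theory.
Import numFieldNormedType.Exports.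
Local Open Scope ring_scope.
Local Open Scope complex_scope.

Section Help.
Variable R : realType.
Local Notation C := R[i].

Lemma adjmxK m n (X : 'M[C]_(m, n)) : adjmx (adjmx X) = X.
Proof.
apply/matrixP => i j; rewrite /adjmx !mxE; exact: conjcK.
Qed.

Lemma adjmxM m n p (X : 'M[C]_(m, n)) (Y : 'M[C]_(n, p)) :
  adjmx (X *m Y) = adjmx Y *m adjmx X.
Proof. by rewrite /adjmx map_mxM trmx_mul. Qed.

Lemma adjmxB m n (X Y : 'M[C]_(m, n)) : adjmx (X - Y) = adjmx X - adjmx Y.
Proof. by rewrite /adjmx map_mxB linearB. Qed.

Lemma adjmxD m n (X Y : 'M[C]_(m, n)) : adjmx (X + Y) = adjmx X + adjmx Y.
Proof. by rewrite /adjmx map_mxD linearD. Qed.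

Lemma adjmx_row m n1 n2 (X : 'M[C]_(m, n1)) (Y : 'M[C]_(m, n2)) :
  adjmx (row_mx X Y) = col_mx (adjmx X) (adjmx Y).
Proof. by rewrite /adjmx map_row_mx tr_row_mx. Qed.

Lemma tr_adj_sum m n (X : 'M[C]_(m, n)) :
  \tr (X *m adjmx X) = \sum_i \sum_j `|X i j| ^+ 2.
Proof.
rewrite /mxtrace; apply: eq_bigr => i _; rewrite mxE; apply: eq_bigr => j _.
by rewrite /adjmx !mxE sqr_normc.
Qed.

Lemma tr_adj_ge0 m n (X : 'M[C]_(m, n)) : 0 <= \tr (X *m adjmx X).
Proof.
rewrite tr_adj_sum; apply: sumr_ge0 => i _; apply: sumr_ge0 => j _.
exact: exprn_ge0.
Qed.

Lemma tr_adj_eq0 m n (X : 'M[C]_(m, n)) : \tr (X *m adjmx X) = 0 -> X = 0.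
Proof.
rewrite tr_adj_sum => /eqP; rewrite psumr_eq0; last first.
  by move=> i _; apply: sumr_ge0 => j _; exact: exprn_ge0.
move=> /allP h; apply/matrixP => i j; rewrite mxE.
have := h i (mem_index_enum i); rewrite implyTb psumr_eq0; last first.
  by move=> k _; exact: exprn_ge0.
move=> /allP /(_ j (mem_index_enum j)); rewrite implyTb expf_eq0 /=.
by rewrite normr_eq0 => /eqP.
Qed.

Lemma normal_eq n p q (N : 'M[C]_(n, p)) (W : 'M[C]_(n, q)) :
  exists P : 'M[C]_(p, q), adjmx N *m (W - N *m P) = 0.
Proof.
suff S : ((adjmx N)^T <= (adjmx N *m N)^T)%MS.
  have : ((adjmx N *m W)^T <= (adjmx N *m N)^T)%MS.
    by rewrite trmx_mul; apply: submx_trans S; exact: submxMl.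
  case/submxP => D hD; exists D^T.
  rewrite mulmxBr mulmxA -[adjmx N *m W]trmxK hD trmx_mul trmxK subrr //.
rewrite submxE; set B := (adjmx N *m N)^T; set Cc := cokermx B.
set X := (adjmx N)^T *m Cc.
have hB : N^T *m X = 0 by rewrite /X mulmxA -trmx_mul; exact: mulmx_coker.
have hX : adjmx X = adjmx Cc *m N^T.
  rewrite /X adjmxM; congr (_ *m _).
  apply/matrixP => i j; rewrite /adjmx !mxE; exact: conjcK.
suff -> : X = 0 by [].
apply: tr_adj_eq0; rewrite mxtrace_mulC hX -mulmxA hB mulmx0; exact: mxtrace0.
Qed.
Lemma Rx_congr n m p q (X : 'M[C]_(n, m)) (Y : 'M[C]_(n, p)) (W1 W2 : 'M[C]_(n, q)) :
  adjmx X *m W1 = adjmx X *m W2 -> adjmx Y *m W1 = adjmx Y *m W2 ->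
  adjmx X *m (W1 *m adjmx W1) *m Y = adjmx X *m (W2 *m adjmx W2) *m Y.
Proof.
move=> hX hY.
have E (W : 'M[C]_(n, q)) : adjmx X *m (W *m adjmx W) *m Y
    = (adjmx X *m W) *m adjmx (adjmx Y *m W).
  by rewrite adjmxM adjmxK !mulmxA.
by rewrite !E hX hY.
Qed.

Lemma Fblock_congr Nt Nr M (A Ath Aph : 'M[C]_(Nt, M)) (B Bth Bph : 'M[C]_(Nr, M))
  (U : 'M[C]_M) (R1 R2 : 'M[C]_Nt) :
  (forall X Y, (X = A \/ X = Ath \/ X = Aph) -> (Y = A \/ Y = Ath \/ Y = Aph) ->
     adjmx X *m R1 *m Y = adjmx X *m R2 *m Y) ->
  Fblock A Ath Aph B Bth Bph U R1 = Fblock A Ath Aph B Bth Bph U R2.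
Proof.
move=> h.
have e1 := h A A (or_introl erefl) (or_introl erefl).
have e2 := h A Ath (or_introl erefl) (or_intror (or_introl erefl)).
have e3 := h A Aph (or_introl erefl) (or_intror (or_intror erefl)).
have e4 := h Ath A (or_intror (or_introl erefl)) (or_introl erefl).
have e5 := h Ath Ath (or_intror (or_introl erefl)) (or_intror (or_introl erefl)).
have e6 := h Ath Aph (or_intror (or_introl erefl)) (or_intror (or_intror erefl)).
have e7 := h Aph A (or_intror (or_intror erefl)) (or_introl erefl).
have e8 := h Aph Ath (or_intror (or_intror erefl)) (or_intror (or_introl erefl)).
have e9 := h Aph Aph (or_intror (or_intror erefl)) (or_intror (or_intror erefl)).
rewrite /Fblock /F11 /F12 /F22 /F13 /F23 /F33 /Fgen /F3gen.
rewrite -!(mulmxA U).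
by rewrite ?e1 ?e2 ?e3 ?e4 ?e5 ?e6 ?e7 ?e8 ?e9.
Qed.
Lemma adjmx0 m n : adjmx (0 : 'M[C]_(m, n)) = 0.
Proof. by apply/matrixP => i j; rewrite /adjmx !mxE conjc0. Qed.

Lemma trNP n p (N : 'M[C]_(n, p)) (P : 'M[C]_p) :
  \tr (N *m P *m adjmx (N *m P)) = \tr (P *m adjmx P *m adjmx N *m N).
Proof. by rewrite adjmxM -!mulmxA mxtrace_mulC !mulmxA. Qed.

End Help.
Local Open Scope classical_set_scope.

Theorem proposition5 (R : realType) (Nt Nr K M L : nat)
  (H : 'M[R[i]]_(Nt, K)) (sigc : 'I_K -> R) (sigs2 dc ds Pt : R)
  (a : 'I_Nt -> R * R -> R[i]) (b : 'I_Nr -> R * R -> R[i])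
  (th ph : 'I_M -> R) (alpha : 'I_M -> R[i]) :
  (0 < Nt)%N -> (0 < Nr)%N -> (0 < K)%N -> (0 < M)%N -> (0 < L)%N ->
  (forall k, 0 < sigc k ^+ 2) -> 0 < sigs2 -> 0 <= dc -> 0 <= ds -> 0 < Pt ->
  (forall i (p : R * R), differentiable (fun q => complex.Re (a i q)) p /\
                         differentiable (fun q => complex.Im (a i q)) p) ->
  (forall i (p : R * R), differentiable (fun q => complex.Re (b i q)) p /\
                         differentiable (fun q => complex.Im (b i q)) p) ->
  let f := fobj L H sigc a b th ph alpha sigs2 dc ds in
  let F := FIM L a b th ph alpha sigs2 in
  (* N = [H, A, dA_theta, dA_phi] *)
  let N : 'M[R[i]]_(Nt, K + (M + (M + M))) :=
    row_mx H (row_mx (steer a th ph) (row_mx (steer_dth a th ph) (steer_dph a th ph))) in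
  (* feasible set of the original problem (where F(W) is invertible) *)
  let D1 := [set W : 'M[R[i]]_(Nt, K + (M + (M + M))) |
              \tr (W *m adjmx W) <= Pt%:C /\ F W \in unitmx] in
  (* feasible set of the reformulated problem *)
  let D2 := [set P : 'M[R[i]]_(K + (M + (M + M))) |
              \tr (P *m adjmx P *m adjmx N *m N) <= Pt%:C /\ F (N *m P) \in unitmx] in
  ereal_sup [set (f W)%:E | W in D1] = ereal_sup [set (f (N *m P))%:E | P in D2]
  /\ (forall P, D2 P -> (forall P', D2 P' -> f (N *m P') <= f (N *m P)) ->
        D1 (N *m P) /\ (forall W, D1 W -> f W <= f (N *m P))).
Proof.
move=> hNt hNr hK hM hL hsig hs hdc hds hPt hda hdb f F N D1 D2.
have cong W1 W2 : adjmx N *m W1 = adjmx N *m W2 -> f W1 = f W2 /\ F W1 = F W2.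
  move=> hW; move: (hW).
  Time rewrite /N !adjmx_row !mul_col_mx.
  Time move=> /eq_col_mx [hH /eq_col_mx [hA /eq_col_mx [hAt hAp]]].
  have eF : FIM L a b th ph alpha sigs2 W1 = FIM L a b th ph alpha sigs2 W2.
    Time rewrite /FIM (@Fblock_congr R Nt Nr M _ _ _ _ _ _ _ (W1 *m adjmx W1) (W2 *m adjmx W2)) //.
    move=> X Y hX hY.
    Time apply: Rx_congr.
      by case: hX => [->|[->|->]].
    by case: hY => [->|[->|->]].
  Time split.
  2: exact: eF.
  have eR : forall k, rate H sigc W1 k = rate H sigc W2 k.
    move=> k. Time rewrite /rate !mulmx_lsub !mulmx_rsub hH. done.
  Time by rewrite /f /fobj eF (eq_bigr _ (fun k _ => eR k)).
have D2D1 P : D2 P -> D1 (N *m P).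
  by rewrite /D1 /D2 /= => -[ht hu]; split => //; rewrite trNP.
have D1D2 W : D1 W -> exists P, D2 P /\ f W = f (N *m P).
  move=> [ht hu].
  case: (@normal_eq R _ _ _ N W) => P hP.
  set E := W - N *m P in hP.
  have hW : W = N *m P + E by rewrite /E addrC subrK.
  have hNE : adjmx N *m W = adjmx N *m (N *m P).
    by apply/eqP; rewrite -subr_eq0 -mulmxBr hP.
  Time have [ef eF] := cong _ _ hNE.
  exists P; split; last by [].
  rewrite /D2 /=; split; last by rewrite -eF.
  apply: le_trans ht.
  have eEN : adjmx E *m N = 0 by rewrite -[N]adjmxK -adjmxM hP adjmx0.
  have c1 : \tr (N *m P *m adjmx E) = 0.
    by rewrite -mulmxA mxtrace_mulC -mulmxA eEN mulmx0 mxtrace0.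
  have c2 : \tr (E *m adjmx (N *m P)) = 0.
    by rewrite adjmxM mulmxA mxtrace_mulC mulmxA hP mul0mx mxtrace0.
  Time rewrite -trNP hW adjmxD mulmxDl !mulmxDr !mxtraceD c1 c2 addr0 add0r.
  by rewrite lerDl tr_adj_ge0.
have eS : [set (f W)%:E | W in D1] = [set (f (N *m P))%:E | P in D2].
  apply/seteqP; split => y [x hx <-].
    by case: (D1D2 x hx) => P [hP ->]; exists P.
  by exists (N *m x) => //; exact: D2D1.
split; first by rewrite eS.
move=> P hP hmax; split; first exact: D2D1.
by move=> W hW; case: (D1D2 W hW) => P' [hP' ->]; exact: hmax.
Qed.
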